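(* Let $K$ be a field, $\mathcal A$ a $K$-algebra, $\vartheta$ any one of the four types (left, right, pre-two-sided, two-sided), and $M$ a $\vartheta$-Mathieu subspace of $\mathcal A$ such that every element of $\sqrt M$ is algebraic over $K$. Let $V$ be a $K$-subspace of $M$ with $I_M\subseteq V$. Then $V$ is a $\vartheta$-Mathieu subspace of $\mathcal A$ and $\sqrt V=\sqrt{I_M}$.
   Context: All algebras are associative and unital. $\sqrt S$ is the set of $a\in\mathcal A$ with $a^m\in S$ for all sufficiently large $m$. For $\vartheta\neq$ pre-two-sided, $I_M$ is the largest $\vartheta$-ideal of $\mathcal A$ contained in $M$ (the sum of all of them), where a $\vartheta$-ideal is a left ideal if $\vartheta$ = left, right ideal if right, two-sided ideal if two-sided; for $\vartheta$ = pre-two-sided, $I_M$ is the sum of the largest left ideal contained in $M$ and the largest right ideal contained in $M$. A $K$-subspace $V$ is a left (resp. right) Mathieu subspace if whenever $a^m\in V$ for all $m\ge1$, then for every $b\in\mathcal A$, $ba^m\in V$ (resp. $a^mb\in V$) for all sufficiently large $m$; pre-two-sided if both left and right; two-sided if whenever $a^m\in V$ for all $m\ge1$, then for all $b,c$, $ba^mc\in V$ for all sufficiently large $m$. *)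

(* Defs.v *)
From HB Require Import structures.
From mathcomp Require Import all_boot all_order all_algebra.
Set Implicit Arguments. Unset Strict Implicit. Unset Printing Implicit Defensive.
Import GRing.Theory.
Local Open Scope ring_scope.

Inductive mtype := MLeft | MRight | MPreTwo | MTwo.

Section Defs.
Variables (K : fieldType) (A : algType K).

Definition is_subspace (V : A -> Prop) : Prop :=
  V 0 /\ forall (k : K) (u v : A), V u -> V v -> V (k *: u + v).

Definition sqrt_set (S : A -> Prop) : A -> Prop :=
  fun a => exists N : nat, forall m : nat, (N <= m)%N -> S (a ^+ m).

Definition algebraic (a : A) : Prop :=
  exists p : {poly K}, p != 0 /\ horner_alg a p = 0.

Definition all_powers_in (V : A -> Prop) (a : A) : Prop :=
  forall m : nat, (1 <= m)%N -> V (a ^+ m).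

Definition left_mathieu_prop (V : A -> Prop) : Prop :=
  forall a, all_powers_in V a ->
  forall b, exists N : nat, forall m : nat, (N <= m)%N -> V (b * a ^+ m).

Definition right_mathieu_prop (V : A -> Prop) : Prop :=
  forall a, all_powers_in V a ->
  forall b, exists N : nat, forall m : nat, (N <= m)%N -> V (a ^+ m * b).

Definition two_mathieu_prop (V : A -> Prop) : Prop :=
  forall a, all_powers_in V a ->
  forall b c, exists N : nat, forall m : nat, (N <= m)%N -> V (b * a ^+ m * c).

Definition is_mathieu (t : mtype) (V : A -> Prop) : Prop :=
  is_subspace V /\
  match t with
  | MLeft => left_mathieu_prop V
  | MRight => right_mathieu_prop V
  | MPreTwo => left_mathieu_prop V /\ right_mathieu_prop V
  | MTwo => two_mathieu_prop V
  end.

Definition is_left_ideal (J : A -> Prop) : Prop :=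
  is_subspace J /\ forall b x, J x -> J (b * x).
Definition is_right_ideal (J : A -> Prop) : Prop :=
  is_subspace J /\ forall b x, J x -> J (x * b).
Definition is_two_ideal (J : A -> Prop) : Prop :=
  is_subspace J /\ forall b c x, J x -> J (b * x * c).

(* The sum of all ideals (of a given kind P) contained in M:
   finite sums of elements each lying in some such ideal. *)
Definition sum_ideals_in (P : (A -> Prop) -> Prop) (M : A -> Prop) : A -> Prop :=
  fun a => exists s : seq A,
    (forall x, x \in s -> exists J : A -> Prop, P J /\ (forall y, J y -> M y) /\ J x)
    /\ a = \sum_(x <- s) x.

Definition I_of (t : mtype) (M : A -> Prop) : A -> Prop :=
  match t with
  | MLeft => sum_ideals_in is_left_ideal M
  | MRight => sum_ideals_in is_right_ideal M
  | MTwo => sum_ideals_in is_two_ideal M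
  | MPreTwo => fun a => exists b c,
      sum_ideals_in is_left_ideal M b /\ sum_ideals_in is_right_ideal M c /\ a = b + c
  end.

End Defs.

(* Main.v *)
Require Import Defs.
From HB Require Import structures.
From mathcomp Require Import all_boot all_order all_algebra.
From mathcomp Require Import ring.
Import GRing.Theory.
Local Open Scope ring_scope.

Section S.
Variables (K : fieldType) (A : algType K) (a : A).
Local Notation h := (horner_alg a).
Lemma stepA (p : {poly K}) : p != 0 -> forall k, h (p * 'X^k) = 0 ->
  exists (r : nat) (s : {poly K}), h (('X:{poly K})^+r) = h (('X:{poly K})^+r.+1 * s).
Proof.
elim/poly_ind: p => [|p c IH]; first by rewrite eqxx.
move=> nz k H.
have [c0|cn0] := eqVneq c 0.
  move: nz H; rewrite c0 addr0 => nz H.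
  have pn0 : p != 0 by apply: contraNneq nz => ->; rewrite mul0r.
  apply: (IH pn0 k.+1); by rewrite exprS mulrA.
exists k, (- (c^-1)%:P * p).
have Hu : c^-1%:P * c%:P = 1 :> {poly K} by rewrite -polyCM mulVf.
have E : 'X^k = c^-1%:P * ((p * 'X + c%:P) * 'X^k) + 'X^(k.+1) * (- (c^-1)%:P * p).
  rewrite -{1}(mul1r 'X^k) -Hu exprS; ring.
by rewrite {1}E rmorphD rmorphM /= H mulr0 add0r.
Qed.
Lemma stepL (r : nat) (s : {poly K}) :
  h (('X:{poly K})^+r) = h (('X:{poly K})^+r.+1 * s) ->
  forall k (g : {poly K}), h ('X^r * g) = h ('X^(r + k) * s ^+ k * g).
Proof.
move=> Hr; elim=> [|k IH] g; first by rewrite addn0 expr0 mulr1.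
rewrite IH.
have -> : ('X^(r + k.+1) * s ^+ k.+1 * g) = ('X^(r.+1) * s) * ('X^k * s^+k * g) :> {poly K}.
  by rewrite addnS !exprS exprD; ring.
have -> : ('X^(r + k) * s ^+ k * g) = ('X^r) * ('X^k * s^+k * g) :> {poly K}.
  by rewrite exprD; ring.
rewrite [LHS]rmorphM [RHS]rmorphM; congr (_ * _); exact: Hr.
Qed.
End S.
Section T.
Variables (K : fieldType) (A : algType K).
Lemma stepP (M : A -> Prop) (a : A) : is_subspace M -> forall (g : {poly K}) N,
  (forall j, (N <= j)%N -> M (a ^+ j)) -> M (horner_alg a ('X^N * g)).
Proof.
move=> [M0 MC]; elim/poly_ind => [|g c IH] N HN; first by rewrite mulr0 rmorph0.
have -> : 'X^N * (g * 'X + c%:P) = c *: 'X^N + 'X^(N.+1) * g :> {poly K}.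
  by rewrite -mul_polyC exprS; ring.
rewrite rmorphD -mul_polyC rmorphM /= horner_algC mulr_algl rmorphXn /= horner_algX.
apply: MC; first exact: HN.
apply: IH => j Hj; apply: HN; exact: ltnW.
Qed.
Lemma hX (a : A) m : horner_alg a ('X^m) = a ^+ m.
Proof. by rewrite rmorphXn /= horner_algX. Qed.

Lemma hC (a : A) (p q : {poly K}) : horner_alg a p * horner_alg a q = horner_alg a q * horner_alg a p.
Proof. by rewrite -!rmorphM mulrC. Qed.

Lemma key (M : A -> Prop) (a : A) N : is_subspace M -> algebraic a ->
  (forall j, (N <= j)%N -> M (a ^+ j)) ->
  exists e r, e * e = e /\ M e /\
    forall m, (r <= m)%N -> a ^+ m * e = a ^+ m /\ e * a ^+ m = a ^+ m.
Proof.
move=> HM [p [pn0 hp]] HN.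
have [r [s Hr]] : exists (r : nat) (s : {poly K}),
    horner_alg a (('X:{poly K})^+r) = horner_alg a (('X:{poly K})^+r.+1 * s).
  apply: (@stepA K A a p pn0 0); by rewrite expr0 mulr1.
have L := @stepL K A a r s Hr.
exists (horner_alg a ('X^r * s ^+ r)), r; split; last split.
- rewrite -rmorphM [RHS](L r (s ^+ r)); congr (horner_alg a _).
  by rewrite exprD; ring.
- rewrite (L N (s ^+ r)).
  have -> : 'X^(r + N) * s ^+ N * s ^+ r = 'X^N * ('X^r * s ^+ N * s ^+ r) :> {poly K}.
    by rewrite exprD; ring.
  exact: stepP.
- move=> m Hm.
  have E : a ^+ m * horner_alg a ('X^r * s ^+ r) = a ^+ m.
    rewrite -(subnKC Hm) -!hX -rmorphM exprD (L r ('X^(m - r))).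
    congr (horner_alg a _); rewrite exprD; ring.
  by split => //; rewrite -hX hC hX.
Qed.

Lemma idem_pow (e : A) : e * e = e -> forall m, e ^+ m.+1 = e.
Proof. move=> He; elim=> [|m IH]; first by rewrite expr1. by rewrite exprS IH He. Qed.

Lemma lem_left (M : A -> Prop) (e : A) : is_subspace M -> left_mathieu_prop M ->
  e * e = e -> M e -> forall b, sum_ideals_in (@is_left_ideal K A) M (b * e).
Proof.
move=> [M0 MC] MP He Me b; exists [:: b * e]; split; last by rewrite big_seq1.
move=> x; rewrite mem_seq1 => /eqP ->.
exists (fun y => exists c, y = c * e); split; last split.
- split; first split; first by exists 0; rewrite mul0r.
    by move=> k u v [c ->] [d ->]; exists (k *: c + d); rewrite mulrDl scalerAl.
  by move=> c x0 [d ->]; exists (c * d); rewrite mulrA.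
- move=> y [c ->].
  have Pe : all_powers_in M e by move=> [|m] // _; rewrite idem_pow.
  have [N HN] := MP e Pe c.
  by have := HN N.+1 (leqnSn N); rewrite idem_pow.
- by exists b.
Qed.

Lemma lem_right (M : A -> Prop) (e : A) : is_subspace M -> right_mathieu_prop M ->
  e * e = e -> M e -> forall b, sum_ideals_in (@is_right_ideal K A) M (e * b).
Proof.
move=> [M0 MC] MP He Me b; exists [:: e * b]; split; last by rewrite big_seq1.
move=> x; rewrite mem_seq1 => /eqP ->.
exists (fun y => exists c, y = e * c); split; last split.
- split; first split; first by exists 0; rewrite mulr0.
    by move=> k u v [c ->] [d ->]; exists (k *: c + d); rewrite mulrDr scalerAr.
  by move=> c x0 [d ->]; exists (d * c); rewrite mulrA.
- move=> y [c ->].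
  have Pe : all_powers_in M e by move=> [|m] // _; rewrite idem_pow.
  have [N HN] := MP e Pe c.
  by have := HN N.+1 (leqnSn N); rewrite idem_pow.
- by exists b.
Qed.

Lemma lem_two (M : A -> Prop) (e : A) : is_subspace M -> two_mathieu_prop M ->
  e * e = e -> M e -> forall b c, sum_ideals_in (@is_two_ideal K A) M (b * e * c).
Proof.
move=> [M0 MC] MP He Me b c; exists [:: b * e * c]; split; last by rewrite big_seq1.
move=> x; rewrite mem_seq1 => /eqP ->.
exists (fun y => exists s : seq (A * A), y = \sum_(q <- s) q.1 * e * q.2); split; last split.
- split; first split; first by exists [::]; rewrite big_nil.
    move=> k u v [s1 ->] [s2 ->].
    exists (map (fun q => (k *: q.1, q.2)) s1 ++ s2).
    rewrite big_cat big_map scaler_sumr; congr (_ + _).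
    by apply: eq_bigr => q _ /=; rewrite -!scalerAl.
  move=> b0 c0 x0 [s1 ->]; exists (map (fun q => (b0 * q.1, q.2 * c0)) s1).
  rewrite big_map mulr_sumr mulr_suml; apply: eq_bigr => q _ /=; by rewrite !mulrA.
- move=> y [s1 ->]; elim: s1 => [|q s1 IH]; first by rewrite big_nil.
  rewrite big_cons -[X in M (X + _)]scale1r; apply: MC => //.
  have Pe : all_powers_in M e by move=> [|m] // _; rewrite idem_pow.
  have [N HN] := MP e Pe q.1 q.2.
  by have := HN N.+1 (leqnSn N); rewrite idem_pow.
- by exists [:: (b, c)]; rewrite big_seq1.
Qed.
End T.

Theorem theorem4p10 (K : fieldType) (A : algType K) (t : mtype)
  (M V : A -> Prop) :
  is_mathieu t M ->
  (forall a, sqrt_set M a -> algebraic a) ->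
  is_subspace V ->
  (forall a, V a -> M a) ->
  (forall a, I_of t M a -> V a) ->
  is_mathieu t V /\ (forall a, sqrt_set V a <-> sqrt_set (I_of t M) a).
Proof.
move=> [MS MP] Halg VS VM IV.
have key' : forall a, sqrt_set M a -> exists e r, e * e = e /\ M e /\
    forall m, (r <= m)%N -> a ^+ m * e = a ^+ m /\ e * a ^+ m = a ^+ m.
  by move=> a [N HN]; apply: (@key K A M a N) => //; apply: Halg; exists N.
have PM : forall a, all_powers_in V a -> sqrt_set M a.
  by move=> a Ha; exists 1%N => m Hm; apply: VM; apply: Ha.
have Isq : forall a, sqrt_set M a -> sqrt_set (I_of t M) a.
  move=> a /key' [e [r [He [Me Hm]]]]; exists r => m Hr.
  have [H1 H2] := Hm m Hr.
  case: t MP IV => /= MP IV.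
  - by rewrite -H1; apply: lem_left.
  - by rewrite -H2; apply: lem_right.
  - case: MP => ML MR; exists (a ^+ m), 0; split; first by rewrite -H1; apply: lem_left.
    split; last by rewrite addr0.
    by exists [::]; split => //; rewrite big_nil.
  - by have := @lem_two K A M e MS MP He Me (a ^+ m) 1; rewrite mulr1 H1.
split.
  split => //.
  clear Isq; case: t MP IV => /= MP IV.
  - move=> a Ha b; have [e [r [He [Me Hm]]]] := key' a (PM a Ha).
    exists r => m Hr; apply: IV; rewrite -(proj1 (Hm m Hr)) mulrA.
    exact: lem_left.
  - move=> a Ha b; have [e [r [He [Me Hm]]]] := key' a (PM a Ha).
    exists r => m Hr; apply: IV; rewrite -(proj2 (Hm m Hr)) -mulrA.
    exact: lem_right.
  - case: MP => ML MR; split.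
    + move=> a Ha b; have [e [r [He [Me Hm]]]] := key' a (PM a Ha).
      exists r => m Hr; apply: IV; exists (b * a ^+ m * e), 0; split.
        exact: lem_left.
      split; first by exists [::]; split => //; rewrite big_nil.
      by rewrite addr0 -mulrA (proj1 (Hm m Hr)).
    + move=> a Ha b; have [e [r [He [Me Hm]]]] := key' a (PM a Ha).
      exists r => m Hr; apply: IV; exists 0, (e * (a ^+ m * b)); split.
        by exists [::]; split => //; rewrite big_nil.
      split; first exact: lem_right.
      by rewrite add0r mulrA (proj2 (Hm m Hr)).
  - move=> a Ha b c; have [e [r [He [Me Hm]]]] := key' a (PM a Ha).
    exists r => m Hr; apply: IV.
    by have := @lem_two K A M e MS MP He Me (b * a ^+ m) c; rewrite -[b * a ^+ m * e]mulrA (proj1 (Hm m Hr)).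
move=> a; split.
  by move=> [N HN]; apply: Isq; exists N => m Hm; apply: VM; apply: HN.
by move=> [N HN]; exists N => m Hm; apply: IV; apply: HN.
Qed.
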